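(* Let $X$ be a finite-dimensional real vector space, ordered by a closed cone $X_+$ with non-empty interior. Then the dual cone $\mathcal{L}(X)'_+ := \{\varphi \in \mathcal{L}(X)' : \varphi(T) \ge 0 \text{ for all } T \in \mathcal{L}(X)_+\}$ is equal to the convex hull of the set $E := \{\varphi_{x,x'} : x \in X_+,\ x' \in X'_+\}$ (in particular this convex hull is closed).
   Context: A cone is a non-empty subset $X_+\subseteq X$ with $X_+ + X_+\subseteq X_+$, $\lambda X_+\subseteq X_+$ for $\lambda\ge 0$, and $X_+\cap(-X_+)=\{0\}$. The dual cone is $X'_+ := \{x' \in X' : \langle x', x\rangle \ge 0 \text{ for all } x \in X_+\}$. $\mathcal{L}(X)$ is the space of linear maps $X\to X$ and $\mathcal{L}(X)_+ := \{T: TX_+ \subseteq X_+\}$. For $x \in X$, $x' \in X'$, the functional $\varphi_{x,x'}$ on $\mathcal{L}(X)$ is defined by $\langle \varphi_{x,x'}, M\rangle := \langle x', Mx\rangle = \operatorname{trace}(M(x\otimes x'))$, where $(x\otimes x')y := \langle x', y\rangle x$. *)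

(* Defs.v *)
From HB Require Import structures.
From mathcomp Require Import all_boot all_order all_algebra.
From mathcomp Require Import all_classical all_reals all_analysis.
Set Implicit Arguments. Unset Strict Implicit. Unset Printing Implicit Defensive.
Import Order.TTheory GRing.Theory Num.Theory.
Import numFieldNormedType.Exports.
Local Open Scope classical_set_scope.
Local Open Scope ring_scope.

(* The finite-dimensional real vector space X is modelled as 'rV[R]_n
   (every n-dimensional real vector space is linearly isomorphic to it),
   with its Euclidean (product) topology.
   X'      := 'Hom(X, R^o)          (linear functionals on X)
   L(X)    := 'End(X)               (linear maps X -> X)
   L(X)'   := 'Hom('End(X), R^o)    (linear functionals on L(X)) *)

Definition is_cone (R : realType) (V : lmodType R) (K : set V) : Prop :=
  [/\ K !=set0,
      (forall x y, K x -> K y -> K (x + y)),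
      (forall (l : R) x, 0 <= l -> K x -> K (l *: x)) &
      (forall x, K x -> K (- x) -> x = 0)].

Definition dual_cone (R : realType) (V : vectType R) (K : set V)
  : set 'Hom(V, R^o) :=
  [set f | forall x, K x -> 0 <= f x].

Definition pos_ops (R : realType) (V : vectType R) (K : set V)
  : set 'End(V) :=
  [set T | forall x, K x -> K (T x)].

Definition E_set (R : realType) (V : vectType R) (K : set V)
  : set 'Hom('End(V), R^o) :=
  [set phi | exists x (x' : 'Hom(V, R^o)),
     [/\ K x, dual_cone K x' & forall M : 'End(V), phi M = x' (M x)]].

Definition conv_hull (R : realType) (W : lmodType R) (E : set W) : set W :=
  [set w | exists (k : nat) (c : 'I_k -> R) (e : 'I_k -> W),
     [/\ (forall i, 0 <= c i), \sum_(i < k) c i = 1,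
         (forall i, E (e i)) & w = \sum_(i < k) c i *: e i]].

(* Main.v *)
Require Import Defs.
From HB Require Import structures.
From mathcomp Require Import all_boot all_order all_algebra.
From mathcomp Require Import all_classical all_reals all_analysis.
From mathcomp Require Import ring lra zify.
Import Order.TTheory GRing.Theory Num.Theory.
Import numFieldNormedType.Exports.
Local Open Scope classical_set_scope.
Local Open Scope ring_scope.
HB.instance Definition _ (T U : ptopologicalType) := Pointed.on (T * U)%type.
Section Basics.
Variable R : realType.

Definition dot {n} (x y : 'rV[R]_n) : R := \sum_(i < n) x ord0 i * y ord0 i.

Lemma dotC {n} (x y : 'rV[R]_n) : dot x y = dot y x.
Proof. by apply: eq_bigr => i _; rewrite mulrC. Qed.

Lemma dotDl {n} (x y z : 'rV[R]_n) : dot (x + y) z = dot x z + dot y z.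
Proof. by rewrite /dot -big_split; apply: eq_bigr => i _; rewrite mxE mulrDl. Qed.

Lemma dotDr {n} (x y z : 'rV[R]_n) : dot z (x + y) = dot z x + dot z y.
Proof. by rewrite dotC dotDl !(dotC z). Qed.

Lemma dotZl {n} a (x y : 'rV[R]_n) : dot (a *: x) y = a * dot x y.
Proof. by rewrite /dot mulr_sumr; apply: eq_bigr => i _; rewrite mxE mulrA. Qed.

Lemma dotZr {n} a (x y : 'rV[R]_n) : dot x (a *: y) = a * dot x y.
Proof. by rewrite dotC dotZl dotC. Qed.

Lemma dotNl {n} (x y : 'rV[R]_n) : dot (- x) y = - dot x y.
Proof. by rewrite -scaleN1r dotZl mulN1r. Qed.

Lemma dotNr {n} (x y : 'rV[R]_n) : dot x (- y) = - dot x y.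
Proof. by rewrite dotC dotNl dotC. Qed.

Lemma dotBl {n} (x y z : 'rV[R]_n) : dot (x - y) z = dot x z - dot y z.
Proof. by rewrite dotDl dotNl. Qed.

Lemma dotBr {n} (x y z : 'rV[R]_n) : dot z (x - y) = dot z x - dot z y.
Proof. by rewrite dotDr dotNr. Qed.

Lemma dot0l {n} (y : 'rV[R]_n) : dot 0 y = 0.
Proof. by rewrite /dot big1 // => i _; rewrite mxE mul0r. Qed.

Lemma dot0r {n} (y : 'rV[R]_n) : dot y 0 = 0.
Proof. by rewrite dotC dot0l. Qed.

Lemma dotxx_ge0 {n} (x : 'rV[R]_n) : 0 <= dot x x.
Proof. by rewrite /dot; apply: sumr_ge0 => i _; rewrite -expr2 sqr_ge0. Qed.

Lemma dotxx_eq0 {n} (x : 'rV[R]_n) : dot x x = 0 -> x = 0.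
Proof.
move=> h; apply/rowP => i; rewrite mxE.
have : x ord0 i * x ord0 i = 0.
  apply/eqP; move/eqP: h; rewrite /dot (bigD1 i) //= paddr_eq0.
  - by case/andP.
  - by rewrite -expr2 sqr_ge0.
  - by apply: sumr_ge0 => j _; rewrite -expr2 sqr_ge0.
by move/eqP; rewrite mulf_eq0 orbb => /eqP.
Qed.

Lemma cont_sum (T : topologicalType) N (f : 'I_N -> T -> R) :
  (forall i, continuous (f i)) -> continuous (fun x => \sum_(i < N) f i x).
Proof.
elim: N f => [|N IH] f fc.
  under eq_fun do rewrite big_ord0.
  exact: cst_continuous.
under eq_fun do rewrite big_ord_recr/=.
move=> x; apply: cvgD.
  exact: (IH (fun i => f (widen_ord (leqnSn N) i))).
exact: fc.
Qed.

Lemma cont_coord n (i : 'I_n) : continuous (fun x : 'rV[R]_n => x ord0 i).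
Proof. exact: coord_continuous. Qed.

Lemma cont_dotr {n} (y : 'rV[R]_n) : continuous (fun x => dot x y).
Proof.
apply: cont_sum => i x.
exact: (cvgM (@cont_coord n i x) (cvg_cst _)).
Qed.

Lemma cont_dotl {n} (y : 'rV[R]_n) : continuous (fun x => dot y x).
Proof. under eq_fun do rewrite dotC. exact: cont_dotr. Qed.


Lemma dot_expand {m} (w d : 'rV[R]_m) t :
  dot (w + t *: d) (w + t *: d) = dot w w + 2 * t * dot w d + t ^+ 2 * dot d d.
Proof. rewrite !dotDl !dotDr !dotZl !dotZr (dotC d w); ring. Qed.

Lemma separation m (C : set 'rV[R]_m) (p : 'rV[R]_m) :
  closed C -> C 0 -> (forall a b, C a -> C b -> C (a + b)) ->
  (forall t a, 0 <= t -> C a -> C (t *: a)) -> ~ C p ->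
  exists w, (forall c, C c -> 0 <= dot w c) /\ dot w p < 0.
Proof.
move=> Ccl C0 CD CZ Cp.
pose f c := dot (p - c) (p - c).
have fc : continuous f.
  have -> : f = fun c => \sum_i (p ord0 i - c ord0 i) * (p ord0 i - c ord0 i).
    by apply: funext => c; rewrite /f /dot; apply: eq_bigr => i _; rewrite !mxE.
  apply: cont_sum => i x.
  have h : (fun y : 'rV_m => p ord0 i - y ord0 i) @ x --> p ord0 i - x ord0 i.
    exact: (cvgB (cvg_cst _) (@cont_coord m i x)).
  exact: (cvgM h h).
pose D := C `&` [set c | f c <= f 0].
have Dcl : closed D.
  apply: closedI => //.
  have := (continuous_closedP f).1 fc _ (@closed_le R (f 0)).
  by [].
pose b := \sum_j `|p ord0 j| + f 0 + 1.
have f0ge : 0 <= f 0 by exact: dotxx_ge0.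
have Dbox : D `<=` [set v | forall i, (fun=> `[(- b), b]%classic) i (v ord0 i)].
  move=> c [_ fcle] i /=; rewrite in_itv /= -ler_norml.
  have hi : (p ord0 i - c ord0 i) ^+ 2 <= f 0.
    apply: le_trans fcle; rewrite /f /dot (bigD1 i) //= !mxE expr2 lerDl.
    by apply: sumr_ge0 => j _; rewrite !mxE -expr2 sqr_ge0.
  have h1 : `|p ord0 i - c ord0 i| <= f 0 + 1.
    rewrite leNgt; apply/negP => hlt.
    have : (f 0 + 1) ^+ 2 < `|p ord0 i - c ord0 i| ^+ 2.
      by rewrite ltr_pXn2r // ?nnegrE ?normr_ge0 // addr_ge0.
    rewrite real_normK ?num_real // => h2.
    have : f 0 < (f 0 + 1) ^+ 2 by nra.
    lra.
  have h2 : `|p ord0 i| <= \sum_j `|p ord0 j|.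
    by rewrite (bigD1 i) //= lerDl sumr_ge0.
  have h3 : `|c ord0 i| <= `|p ord0 i| + `|p ord0 i - c ord0 i|.
    have e : c ord0 i = p ord0 i - (p ord0 i - c ord0 i) by rewrite opprB addrC subrK.
    by rewrite {1}e ler_normB.
  rewrite /b; lra.
have Dcomp : compact D.
  apply: subclosed_compact Dcl _ Dbox.
  have hh := (@rV_compact _ m (fun=> `[(- b), b]%classic) (fun i => @segment_compact R (- b) b)).
  exact: hh.
have D0 : D !=set0 by exists 0; split => //=.
have [q0 q0D q0min] := EVT_min_rV D0 Dcomp (@continuous_subspaceT _ _ D f fc).
move: q0D; rewrite inE => -[Cq0 fq0].
have fmin c : C c -> f q0 <= f c.
  move=> Cc; have [fc0|] := leP (f c) (f 0).
    by apply: q0min; rewrite inE.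
  by move=> /ltW; apply: le_trans.
pose w := q0 - p.
have key c : C c -> 0 <= dot w (c - q0).
  move=> Cc; rewrite leNgt; apply/negP => alt.
  set a := dot w (c - q0) in alt *.
  set bb := dot (c - q0) (c - q0).
  have bb0 : 0 <= bb by exact: dotxx_ge0.
  pose t := - a / (bb - a).
  have bap : 0 < bb - a by lra.
  have ht : t * (bb - a) = - a by rewrite /t mulrVK // unitfE gt_eqF.
  have t0 : 0 < t by rewrite /t divr_gt0 // oppr_gt0.
  have t1 : t <= 1 by rewrite /t ler_pdivrMr // mul1r; lra.
  have Cct : C (q0 + t *: (c - q0)).
    have -> : q0 + t *: (c - q0) = (1 - t) *: q0 + t *: c.
      by apply/rowP => j; rewrite !mxE; ring.
    by apply: CD; apply: CZ => //; lra.
  have := fmin _ Cct.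
  have e1 : p - (q0 + t *: (c - q0)) = - (w + t *: (c - q0)).
    by apply/rowP => j; rewrite /w !mxE; ring.
  have e0 : p - q0 = - w by apply/rowP => j; rewrite /w !mxE; ring.
  rewrite /f e1 e0 !dotNl !dotNr !opprK dot_expand -/a -/bb.
  move=> h.
  have h' : 0 <= t * (2 * a + t * bb) by nra.
  have : (2 * a + t * bb) * (bb - a) < 0.
    have -> : (2 * a + t * bb) * (bb - a) = 2 * a * (bb - a) + bb * (t * (bb - a)) by ring.
    rewrite ht; nra.
  nra.
have wq0 : dot w q0 = 0.
  have h1 := key _ C0; have h2 := key _ (CZ 2 _ (ler0n _ 2) Cq0).
  rewrite sub0r dotNr in h1.
  have e : 2 *: q0 - q0 = q0 by apply/rowP => j; rewrite !mxE; ring.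
  rewrite e in h2; lra.
exists w; split.
  move=> c Cc; have := key _ Cc; rewrite dotBr wq0; lra.
have pe : p = q0 - w by apply/rowP => j; rewrite /w !mxE; ring.
have wne : w != 0.
  apply/eqP => w0; apply: Cp; rewrite pe w0 subr0 //.
have ww : 0 < dot w w.
  rewrite lt_neqAle dotxx_ge0 andbT eq_sym; apply/eqP => /dotxx_eq0 h.
  by rewrite h eqxx in wne.
rewrite pe dotBr wq0; lra.
Qed.

Lemma sum_drop (V : zmodType) N (F : nat -> V) (k0 : nat) : (k0 <= N)%N ->
  F k0 = 0 -> \sum_(k < N) (if (k == k0 :> nat) then F N else F k) = \sum_(k < N.+1) F k.
Proof.
move=> hk0 Fk0; rewrite big_ord_recr /=.
case: (ltnP k0 N) => hk.
- rewrite (bigD1 (Ordinal hk)) //= eqxx [in RHS](bigD1 (Ordinal hk)) //= Fk0 add0r.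
  rewrite addrC; congr (_ + _); apply: eq_bigr => i hi.
  case: eqP => // hik; exfalso; move: hi; apply/negP/negPn/eqP.
  by apply: val_inj.
- have e : k0 = N by apply/eqP; rewrite eqn_leq hk0 hk.
  rewrite -e Fk0 addr0; apply: eq_bigr => i _.
  by rewrite (ltn_eqF (ltn_ord i)) // e.
Qed.

Lemma fin_max N (f : nat -> R) :
  exists k, (k <= N)%N /\ forall j, (j <= N)%N -> f j <= f k.
Proof.
elim: N => [|N [k [hk hmax]]].
  by exists 0%N; split => // j; rewrite leqn0 => /eqP ->.
case: (lerP (f k) (f N.+1)) => h.
  exists N.+1; split => // j; rewrite leq_eqVlt => /orP [/eqP -> //|hj].
  exact: le_trans (hmax j hj) h.
exists k; split; first by apply: leqW.
move=> j; rewrite leq_eqVlt => /orP [/eqP -> |hj]; first exact: ltW.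
exact: hmax.
Qed.

Lemma nonzero_row k m (A : 'M[R]_(k, m)) : (0 < \rank A)%N -> exists i, row i A != 0.
Proof.
move=> rA; apply/not_existsP => hall; move: rA.
have -> : A = 0.
  apply/row_matrixP => i; rewrite row0; apply/eqP; apply/negPn/negP => hi.
  exact: (hall i hi).
by rewrite mxrank0.
Qed.

Lemma caratheodory m (S : set 'rV[R]_m) : S 0 ->
  (forall t a, 0 <= t -> S a -> S (t *: a)) ->
  forall N (s : nat -> 'rV[R]_m), (forall k, S (s k)) ->
  exists s' : nat -> 'rV[R]_m, (forall k, S (s' k)) /\
    \sum_(k < N) s k = \sum_(k < m) s' k.
Proof.
move=> S0 SZ; elim=> [|N IH] s hs.
  by exists (fun=> 0); split => //; rewrite big_ord0 big1.
case: (leqP N.+1 m) => hNm.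
  exists (fun k => if (k < N.+1)%N then s k else 0); split.
    by move=> k; case: ifP.
  by rewrite (big_ord_widen _ _ hNm) big_mkcond.
pose Mt : 'M[R]_(N.+1, m) := \matrix_(k, j) s k ord0 j.
have rowMt (k : 'I_N.+1) : row k Mt = s k by apply/rowP => j; rewrite !mxE.
have rZ : (0 < \rank (kermx Mt))%N.
  by rewrite mxrank_ker; have := rank_leq_col Mt; lia.
have [i0 hi0] := nonzero_row _ _ _ rZ.
set w := row i0 (kermx Mt) in hi0.
have hw : w *m Mt = 0 by rewrite /w -row_mul mulmx_ker row0.
have hsum : \sum_(k < N.+1) w 0 k *: s k = 0.
  transitivity (w *m Mt); last exact: hw.
  by rewrite mulmx_sum_row; apply: eq_bigr => k _; rewrite rowMt.
have [k1 hk1] : exists k1, w 0 k1 != 0.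
  apply/not_existsP => hall; move: hi0; apply/negP/negPn/eqP/rowP => j.
  by rewrite [RHS]mxE; apply/eqP/negPn/negP => hj; exact: (hall j hj).
pose v k := (w 0 k1)^-1 * w 0 (inord k).
have vk1 : v k1 = 1 by rewrite /v inord_val mulVf.
have hv : \sum_(k < N.+1) v k *: s k = 0.
  rewrite /v; under eq_bigr => k _ do rewrite inord_val -scalerA.
  by rewrite -scaler_sumr hsum scaler0.
have [kk [hkk hmax]] := fin_max N v.
have vpos : 0 < v kk by rewrite (lt_le_trans _ (hmax k1 _)) ?vk1 // -ltnS.
have vmax j : v j <= v kk.
  by rewrite /v; have := hmax (inord j : 'I_N.+1) (leq_ord _); rewrite /v inord_val.
pose c k := 1 - v k / v kk.
have c0 k : 0 <= c k by rewrite /c subr_ge0 ler_pdivrMr // mul1r.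
have ckk : c kk = 0 by rewrite /c divff ?subrr // gt_eqF.
pose F k := c k *: s k.
have hF : \sum_(k < N.+1) F k = \sum_(k < N.+1) s k.
  rewrite /F /c; under eq_bigr => k _ do rewrite scalerBl scale1r.
  rewrite sumrB; under [X in _ - X]eq_bigr => k _ do rewrite mulrC -scalerA.
  by rewrite -scaler_sumr hv scaler0 subr0.
pose s2 k := if (k == kk :> nat) then F N else F k.
have [s' [hs' hsum']] := IH s2 (fun k => ltac:(rewrite /s2 /F; case: ifP => _; apply: SZ; [exact: c0|exact: hs|exact: c0|exact: hs])).
exists s'; split => //.
have Fkk : F kk = 0 by rewrite /F ckk scale0r.
by rewrite -hsum' /s2 (@sum_drop _ N F kk hkk Fkk) hF.
Qed.
Lemma dot_mul {m} (a b : 'rV[R]_m) : dot a b = (a *m b^T) ord0 ord0.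
Proof. by rewrite /dot !mxE; apply: eq_bigr => j _; rewrite mxE. Qed.

Lemma dot_delta {m} (x : 'rV[R]_m) i : dot x (delta_mx 0 i) = x ord0 i.
Proof.
rewrite /dot (bigD1 i) //= mxE eqxx mulr1 big1 ?addr0 // => j /negbTE hj.
by rewrite mxE eq_sym hj mulr0.
Qed.

Lemma dot_sumr {m} N (x : 'rV[R]_m) (f : 'I_N -> 'rV[R]_m) :
  dot x (\sum_(k < N) f k) = \sum_(k < N) dot x (f k).
Proof.
elim: N f => [|N IH] f; first by rewrite !big_ord0 dot0r.
by rewrite !big_ord_recr /= dotDr IH.
Qed.

Lemma dot_suml {m} N (x : 'rV[R]_m) (f : 'I_N -> 'rV[R]_m) :
  dot (\sum_(k < N) f k) x = \sum_(k < N) dot (f k) x.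
Proof. by rewrite dotC dot_sumr; apply: eq_bigr => k _; rewrite dotC. Qed.

Section Cone.
Variable n : nat.
Variable K : set 'rV[R]_n.
Hypothesis Kne : K !=set0.
Hypothesis KD : forall x y, K x -> K y -> K (x + y).
Hypothesis KZ : forall (l : R) x, 0 <= l -> K x -> K (l *: x).
Hypothesis Kpt : forall x, K x -> K (- x) -> x = 0.
Hypothesis Kcl : closed K.

Definition Kd := [set y : 'rV[R]_n | forall x, K x -> 0 <= dot x y].

Lemma K0 : K 0.
Proof. by case: Kne => x Kx; rewrite -(scale0r x); apply: KZ. Qed.

Lemma bipolar x : ~ K x -> exists y, Kd y /\ dot x y < 0.
Proof.
move=> nKx; have [w [h1 h2]] := @separation n K x Kcl K0 KD KZ nKx.
by exists w; split => [z Kz|]; rewrite dotC //; apply: h1.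
Qed.

Lemma Kd0 : Kd 0.
Proof. by move=> x _; rewrite dot0r. Qed.

Lemma KdD a b : Kd a -> Kd b -> Kd (a + b).
Proof. by move=> ha hb x Kx; rewrite dotDr addr_ge0 //; [apply: ha | apply: hb]. Qed.

Lemma KdZ (l : R) a : 0 <= l -> Kd a -> Kd (l *: a).
Proof. by move=> l0 ha x Kx; rewrite dotZr mulr_ge0 //; apply: ha. Qed.

Lemma Kd_closed : closed Kd.
Proof.
have -> : Kd = \bigcap_(x in K) [set y | 0 <= dot x y].
  by apply: funext => y; apply: propext; split => [h x Kx|h x Kx]; [exact: h | exact: h].
apply: closed_bigI => x _.
have := (continuous_closedP (fun y => dot x y)).1 (cont_dotl x) _ (@closed_ge R 0).
by [].
Qed.

Lemma Kd_perp z : (forall y, Kd y -> dot z y = 0) -> z = 0.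
Proof.
move=> h; apply: Kpt.
  apply/not_notP => nK; have [y [Ky hy]] := bipolar _ nK.
  by rewrite h // in hy; rewrite ltxx in hy.
apply/not_notP => nK; have [y [Ky hy]] := bipolar _ nK.
by rewrite dotNl h // oppr0 ltxx in hy.
Qed.

Definition Dsp := [set v : 'rV[R]_n | exists a b, [/\ Kd a, Kd b & v = a - b]].

Lemma Dsp0 : Dsp 0.
Proof. by exists 0, 0; split; rewrite ?subr0 //; apply: Kd0. Qed.

Lemma DspD a b : Dsp a -> Dsp b -> Dsp (a + b).
Proof.
move=> [a1 [a2 [h1 h2 ->]]] [b1 [b2 [h3 h4 ->]]].
exists (a1 + b1), (a2 + b2); split; try exact: KdD.
by apply/rowP => j; rewrite !mxE; ring.
Qed.

Lemma DspZ (l : R) a : Dsp a -> Dsp (l *: a).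
Proof.
move=> [a1 [a2 [h1 h2 ->]]]; have [l0|l0] := leP 0 l.
  exists (l *: a1), (l *: a2); split; try exact: KdZ.
  by apply/rowP => j; rewrite !mxE; ring.
exists ((- l) *: a2), ((- l) *: a1); split; try (apply: KdZ => //; lra).
by apply/rowP => j; rewrite !mxE; ring.
Qed.

Lemma Dsp_mul k (c : 'rV[R]_k) (B : 'M[R]_(k, n)) :
  (forall i, Dsp (row i B)) -> Dsp (c *m B).
Proof.
move=> hB; rewrite mulmx_sum_row.
elim/big_ind: _ => //; [exact: Dsp0 | exact: DspD | move=> i _; exact: DspZ].
Qed.

Lemma Dsp_all v : Dsp v.
Proof.
have main : forall d k (B : 'M[R]_(k, n)), (forall i, Dsp (row i B)) ->
    (n - \rank B)%N = d -> exists k' (B' : 'M[R]_(k', n)),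
    (forall i, Dsp (row i B')) /\ forall v, Dsp v -> (v <= B')%MS.
  elim/ltn_ind => d IH k B hB hd.
  case: (pselect (forall v, Dsp v -> (v <= B)%MS)) => [h|]; first by exists k, B.
  move/existsNP => [w /not_implyP [Dw nwB]].
  have rlt : (\rank B < \rank (col_mx B w))%N.
    rewrite -addsmxE; apply: rank_ltmx; rewrite ltmxE addsmxSl /=.
    apply/negP => h; apply: nwB; exact: submx_trans (addsmxSr B w) h.
  have rle := rank_leq_col (col_mx B w).
  apply: (IH (n - \rank (col_mx B w))%N) _ _ (col_mx B w) _ erefl.
    by rewrite -hd; lia.
  move=> i; rewrite -(splitK i); case: (fintype.split i) => j /=; rewrite ?rowKu ?rowKd ?row_id //.
pose B0 : 'M[R]_(0, n) := 0.
have h0 : forall i : 'I_0, Dsp (row i B0) by case.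
have hr : (n - \rank B0)%N = n by rewrite mxrank0 subn0.
have [k' [B' [hB' hsp]]] := main n _ B0 h0 hr.
have full : row_full B'.
  rewrite /row_full eqn_leq rank_leq_col /=; rewrite leqNgt; apply/negP => rlt.
  pose Z := kermx (B'^T).
  have rZ : (0 < \rank Z)%N by rewrite mxrank_ker mxrank_tr; lia.
  have [i0 hi0] : exists i0, row i0 Z != 0.
    apply/not_existsP => hall; move: rZ.
    have -> : Z = 0.
      apply/row_matrixP => i; rewrite row0; apply/eqP; apply/negPn/negP => hi.
      exact: (hall i hi).
    by rewrite mxrank0.
  set z := row i0 Z.
  have zB : z *m B'^T = 0 by rewrite /z -row_mul mulmx_ker row0.
  suff : z = 0 by move=> z0; move: hi0; rewrite -/z z0 eqxx.
  apply: Kd_perp => y Ky.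
  have : (y <= B')%MS by apply: hsp; exists y, 0; split; rewrite ?subr0 //; exact: Kd0.
  move=> /submxP [c ->].
  by rewrite dot_mul trmx_mul mulmxA zB mul0mx mxE.
have /submxP [c ->] : (v <= B')%MS by apply: submx_full.
exact: Dsp_mul.
Qed.

Lemma g_exists : exists g, Kd g /\ forall x, K x -> forall i, `|x ord0 i| <= dot x g.
Proof.
have hD : forall i : 'I_n, exists ab : 'rV[R]_n * 'rV[R]_n,
    [/\ Kd ab.1, Kd ab.2 & delta_mx 0 i = ab.1 - ab.2].
  by move=> i; have [a [b [h1 h2 h3]]] := Dsp_all (delta_mx 0 i); exists (a, b).
have [f hf] := fin_all_exists hD.
exists (\sum_i ((f i).1 + (f i).2)); split.
  elim/big_ind: _ => [|a b|i _]; [exact: Kd0|exact: KdD|].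
  by case: (hf i) => h1 h2 _; exact: KdD.
move=> x Kx i; rewrite dot_sumr (bigD1 i) //=.
case: (hf i) => h1 h2 h3.
have e : x ord0 i = dot x (f i).1 - dot x (f i).2 by rewrite -dotBr -h3 dot_delta.
have p1 := h1 x Kx; have p2 := h2 x Kx.
have rest : 0 <= \sum_(j < n | j != i) dot x ((f j).1 + (f j).2).
  apply: sumr_ge0 => j _; case: (hf j) => q1 q2 _; rewrite dotDr.
  exact: addr_ge0 (q1 x Kx) (q2 x Kx).
rewrite dotDr e ler_norml; apply/andP; split; lra.
Qed.

Hypothesis Kint : interior K !=set0.

Lemma u_exists : exists u e, [/\ K u, 0 < e &
  forall y, Kd y -> forall i, e * `|y ord0 i| <= dot u y].
Proof.
case: Kint => u /= hu.
have [e e0 he] := (nbhs_ballP u K).1 hu.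
exists u, (e / 2); split.
- exact: nbhs_singleton hu.
- by rewrite divr_gt0.
move=> y Ky i.
have hb s : `|s| <= e / 2 -> K (u + s *: delta_mx 0 i).
  move=> hs; apply: he; split => // a j; rewrite /ball /= !mxE.
  rewrite opprD addrA subrr add0r normrN normrM.
  case: (_ && _) => /=; rewrite ?normr1 ?normr0 ?mulr1 ?mulr0 //.
  apply: (le_lt_trans hs); rewrite ltr_pdivrMr // ltr_pMr // ltr1n //.
have ee : 0 < e / 2 by rewrite divr_gt0.
have n1 : `|e / 2| <= e / 2 by rewrite ger0_norm // ltW.
have n2 : `|- (e / 2)| <= e / 2 by rewrite normrN ger0_norm // ltW.
have p := Ky _ (hb _ n1); have m := Ky _ (hb _ n2).
rewrite dotDl dotZl (dotC (delta_mx 0 i) y) dot_delta in p.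
rewrite dotDl dotZl (dotC (delta_mx 0 i) y) dot_delta in m.
case: (lerP 0 (y ord0 i)) => h; [rewrite ger0_norm // | rewrite ltr0_norm //]; nra.
Qed.

Definition Atens (x y : 'rV[R]_n) : 'M[R]_n := \matrix_(i, j) (x ord0 i * y ord0 j).
Definition G (p : 'rV[R]_n * 'rV[R]_n) : 'rV[R]_(n * n) := mxvec (Atens p.1 p.2).

Lemma pairE (M A : 'M[R]_n) :
  dot (mxvec M) (mxvec A) = \sum_i \sum_j M i j * A i j.
Proof.
rewrite /dot (reindex _ (curry_mxvec_bij n n)) /= pair_big.
by apply: eq_bigr => -[i j] _ /=; rewrite !mxvecE.
Qed.

Lemma pair_tens (M : 'M[R]_n) x y : dot (mxvec M) (G (x, y)) = dot (x *m M) y.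
Proof.
rewrite /G pairE /dot /=.
under [RHS]eq_bigr => j _ do rewrite mxE mulr_suml.
rewrite exchange_big /=; apply: eq_bigr => i _; apply: eq_bigr => j _.
by rewrite mxE; ring.
Qed.

Lemma G_scale x y (l : R) : l != 0 -> G (l *: x, l^-1 *: y) = G (x, y).
Proof.
move=> l0; rewrite /G /=; congr mxvec; apply/matrixP => i j; rewrite !mxE.
by field.
Qed.

Lemma G_scalel x y (l : R) : G (l *: x, y) = l *: G (x, y).
Proof.
rewrite /G /= -linearZ /=; congr mxvec; apply/matrixP => i j; rewrite !mxE.
by rewrite mulrA.
Qed.

Lemma G_0r x : G (x, 0) = 0.
Proof.
rewrite /G /=; apply/eqP; rewrite mxvec_eq0; apply/eqP/matrixP => i j.
by rewrite !mxE mulr0.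
Qed.

Definition CEv := [set v : 'rV[R]_(n * n) | exists N (xs ys : nat -> 'rV[R]_n),
  [/\ forall k, K (xs k), forall k, Kd (ys k) & v = \sum_(k < N) G (xs k, ys k)]].

Lemma CEv0 : CEv 0.
Proof.
exists 0%N, (fun=> 0), (fun=> 0); split => //; first by move=> _; exact: K0.
  by move=> _; exact: Kd0.
by rewrite big_ord0.
Qed.

Lemma CEv_gen x y : K x -> Kd y -> CEv (G (x, y)).
Proof.
move=> Kx Ky; exists 1%N, (fun=> x), (fun=> y); split => //.
by rewrite big_ord1.
Qed.

Lemma CEvD a b : CEv a -> CEv b -> CEv (a + b).
Proof.
move=> [N1 [xs1 [ys1 [h1 h2 ->]]]] [N2 [xs2 [ys2 [h3 h4 ->]]]].
exists (N1 + N2)%N, (fun k => if (k < N1)%N then xs1 k else xs2 (k - N1)%N),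
  (fun k => if (k < N1)%N then ys1 k else ys2 (k - N1)%N); split.
- by move=> k; case: ifP.
- by move=> k; case: ifP.
rewrite big_split_ord /=; congr (_ + _); apply: eq_bigr => i _ /=.
  by rewrite ltn_ord.
by rewrite ltnNge leq_addr /= addKn.
Qed.

Lemma CEvZ (t : R) a : 0 <= t -> CEv a -> CEv (t *: a).
Proof.
move=> t0 [N [xs [ys [h1 h2 ->]]]].
exists N, (fun k => t *: xs k), ys; split => //.
  by move=> k; apply: KZ.
rewrite scaler_sumr; apply: eq_bigr => k _; by rewrite G_scalel.
Qed.
Lemma cont_sumV (T : topologicalType) (V : normedModType R) N (f : 'I_N -> T -> V) :
  (forall i, continuous (f i)) -> continuous (fun x => \sum_(i < N) f i x).
Proof.
elim: N f => [|N IH] f fc.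
  under eq_fun do rewrite big_ord0.
  exact: cst_continuous.
under eq_fun do rewrite big_ord_recr/=.
move=> x; apply: cvgD.
  exact: (IH (fun i => f (widen_ord (leqnSn N) i))).
exact: fc.
Qed.

Lemma cont_mcoord (T : topologicalType) N (i : 'I_N) :
  continuous (fun z : 'rV[T]_N => z ord0 i).
Proof.
move=> z A /= hA.
exists (fun k l => if l == i then A else setT).
  by move=> k l; case: eqP => [->|_]; [rewrite (ord1 k) | exact: filterT].
by move=> w /(_ ord0 i); rewrite eqxx.
Qed.

Lemma cont_G : continuous G.
Proof.
have -> : G = fun p => \sum_a \sum_b ((p.1 ord0 a * p.2 ord0 b) *: mxvec (delta_mx a b : 'M[R]_n)).
  apply: funext => p; rewrite /G {1}(matrix_sum_delta (Atens p.1 p.2)).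
  rewrite linear_sum; apply: eq_bigr => a _; rewrite linear_sum; apply: eq_bigr => b _.
  by rewrite linearZ /= mxE.
apply: cont_sumV => a; apply: cont_sumV => b p.
apply: cvgZ; last exact: cvg_cst.
apply: cvgM.
  apply: (@continuous_comp _ _ _ fst (fun x : 'rV[R]_n => x ord0 a)).
    exact: cvg_fst.
  exact: cont_coord.
apply: (@continuous_comp _ _ _ snd (fun x : 'rV[R]_n => x ord0 b)).
  exact: cvg_snd.
exact: cont_coord.
Qed.
Lemma CEv_closed : closed CEv.
Proof.
have [g [Kdg hg]] := g_exists.
have [u [e [Ku e0 hu]]] := u_exists.
pose T0 : 'M[R]_n := \matrix_(i, j) (g ord0 i * u ord0 j).
pose l v := dot (mxvec T0) v.
have lG x y : l (G (x, y)) = dot x g * dot u y.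
  rewrite /l pair_tens.
  have -> : x *m T0 = dot x g *: u.
    apply/rowP => j; rewrite !mxE /dot mulr_suml; apply: eq_bigr => i _.
    by rewrite mxE mulrA.
  by rewrite dotZl.
have lG0 x y : K x -> Kd y -> 0 <= l (G (x, y)).
  by move=> Kx Ky; rewrite lG mulr_ge0 //; [exact: Kdg | exact: Ky].
move=> p cp.
pose L := l p + 1.
pose box (b : R) := [set v : 'rV[R]_n | forall i, (fun=> `[(- b), b]%classic) i (v ord0 i)].
have boxc b : compact (box b).
  exact: (@rV_compact _ n (fun=> `[(- b), b]%classic) (fun i => @segment_compact R (- b) b)).
pose B1 := box L `&` K.
pose B2 := box (e^-1) `&` Kd.
have B12c : compact (B1 `*` B2).
  by apply: compact_setX; apply: compact_closedI => //; exact: Kd_closed.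
pose Bx := [set z : 'rV[('rV[R]_n * 'rV[R]_n)%type]_(n * n) |
   forall i, (fun=> B1 `*` B2) i (z ord0 i)].
have Bxc : compact Bx.
  have hh := (@rV_compact ('rV[R]_n * 'rV[R]_n)%type (n * n) (fun=> B1 `*` B2) (fun=> B12c)).
  exact: hh.
pose Fz (z : 'rV[('rV[R]_n * 'rV[R]_n)%type]_(n * n)) := \sum_(i < n * n) G (z ord0 i).
have Fzc : continuous Fz.
  apply: cont_sumV => i z.
  exact: (@continuous_comp _ _ _ (fun z0 : 'rV[('rV[R]_n * 'rV[R]_n)%type]_(n * n) => z0 ord0 i) G z (@cont_mcoord _ _ i z) (cont_G _)).
pose FB := Fz @` Bx.
have FBcl : closed FB.
  apply: compact_closed; first exact: norm_hausdorff.
  exact: (continuous_compact (@continuous_subspaceT _ _ Bx Fz Fzc) Bxc).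
have FBsub : FB `<=` CEv.
  move=> _ [z hz <-].
  pose xs k := oapp (fun i => (z ord0 i).1) 0 (insub k : option 'I_(n * n)).
  pose ys k := oapp (fun i => (z ord0 i).2) 0 (insub k : option 'I_(n * n)).
  exists (n * n)%N, xs, ys; split.
  - move=> k; rewrite /xs; case: insubP => [i _ _ /=|_ /=]; last exact: K0.
    by case: (hz i) => -[].
  - move=> k; rewrite /ys; case: insubP => [i _ _ /=|_ /=]; last exact: Kd0.
    by case: (hz i) => _ [].
  apply: eq_bigr => i _; rewrite /xs /ys valK /=.
  by case: (z ord0 i).
have Usub : CEv `&` [set v | l v < L] `<=` FB.
  move=> v [[N [xs [ys [hx hy hv]]]] /= hl].
  pose S := [set w : 'rV[R]_(n * n) | exists q : 'rV[R]_n * 'rV[R]_n,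
    [/\ K q.1, Kd q.2 & w = G q]].
  have S0 : S 0.
    by exists (0, 0); split => /=; [exact: K0 | exact: Kd0 | rewrite G_0r].
  have SZ t a : 0 <= t -> S a -> S (t *: a).
    move=> t0 [[x y] [Kx Ky ->]]; exists (t *: x, y); split => //=.
      exact: KZ.
    by rewrite G_scalel.
  have hsS k : S (G (xs k, ys k)).
    by exists (xs k, ys k); split => //=.
  have [s' [hs' hsum]] := @caratheodory _ S S0 SZ N (fun k => G (xs k, ys k)) hsS.
  have [f hf] := choice hs'.
  rewrite -hv in hsum.
  have lsum : l v = \sum_(k < n * n) l (s' k) by rewrite hsum /l dot_sumr.
  have lk (k : 'I_(n * n)) : l (s' k) <= l v.
    rewrite lsum (bigD1 k) //= lerDl; apply: sumr_ge0 => j _.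
    case: (hf j) => h1 h2 ->; move: h1 h2; case: (f j) => x y /= h1 h2.
    exact: lG0.
  have lv0 : 0 <= l v.
    by rewrite lsum; apply: sumr_ge0 => j _; case: (hf j) => h1 h2 ->;
      move: h1 h2; case: (f j) => x y /= h1 h2; exact: lG0.
  have L0 : 0 <= L by apply: ltW; exact: le_lt_trans lv0 hl.
  have ei0 : 0 <= e^-1 by rewrite invr_ge0 ltW.
  pose nz k := dot u (f k).2.
  pose p' k := if nz k == 0 then ((0 : 'rV[R]_n), (0 : 'rV[R]_n))
    else (nz k *: (f k).1, (nz k)^-1 *: (f k).2).
  have hp' (k : 'I_(n * n)) : G (p' k) = s' k /\ (B1 `*` B2) (p' k).
    case: (hf k) => /= Kx Ky e1.
    have nz0 : 0 <= nz k := Ky u Ku.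
    rewrite /p'; case: eqP => hnz.
    - have y0 : (f k).2 = 0.
        apply/rowP => j; rewrite mxE; apply/normr0_eq0/le_anti/andP; split; last by [].
        have := hu _ Ky j; rewrite -/(nz k) hnz => h.
        by rewrite -(ler_pM2l e0) mulr0.
      split.
        by rewrite e1; move: y0; case: (f k) => x y /= ->; rewrite !G_0r.
      split; split => //=; try exact: K0; try exact: Kd0.
        1,2: by rewrite /box => i /=; rewrite mxE in_itv /= -ler_norml normr0.
    - split.
        by rewrite e1 G_scale; [case: (f k) | apply/eqP].
      split; split => /=.
      + rewrite /box => i /=; rewrite in_itv /= -ler_norml.
        have Knx : K (nz k *: (f k).1) by apply: KZ.
        apply: le_trans (hg _ Knx i) _; rewrite dotZl.
        apply: ltW; apply: le_lt_trans hl; apply: le_trans (lk k).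
        by rewrite e1 [f k]surjective_pairing lG /= mulrC /nz.
      + by apply: KZ.
      + rewrite /box => i /=; rewrite in_itv /= -ler_norml.
        have Kdy : Kd ((nz k)^-1 *: (f k).2) by apply: KdZ; rewrite ?invr_ge0.
        have := hu _ Kdy i; rewrite dotZr -/(nz k) mulVf; last by apply/eqP.
        by move=> h; rewrite -(ler_pM2l e0) mulfV ?gt_eqF.
      + by apply: KdZ; rewrite ?invr_ge0.
  exists (\row_i p' i).
    by move=> i; rewrite mxE; exact: (hp' i).2.
  by rewrite /Fz hsum; apply: eq_bigr => i _; rewrite mxE (hp' i).1.
have cpU : closure (CEv `&` [set v | l v < L]) p.
  move=> B hB.
  have hU : nbhs p [set v | l v < L].
    apply: open_nbhs_nbhs; split; last by rewrite /= /L ltrDl.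
    have := (continuousP l).1 (cont_dotl (mxvec T0)) _ (@open_lt R L).
    by [].
  have [q [Cq [Bq Uq]]] := cp _ (filterI hB hU).
  by exists q.
apply: FBsub; apply: FBcl.
exact: (closure_subset Usub) cpU.
Qed.
Lemma conc_main (A : 'M[R]_n) :
  (forall M : 'M[R]_n, (forall x, K x -> K (x *m M)) -> 0 <= dot (mxvec M) (mxvec A)) ->
  exists N (xs ys : nat -> 'rV[R]_n), [/\ forall k, K (xs k), forall k, Kd (ys k) &
     A = \sum_(k < N) Atens (xs k) (ys k)].
Proof.
move=> hA.
have : CEv (mxvec A).
  apply/not_notP => nA.
  have [w [hw1 hw2]] := @separation _ CEv (mxvec A) CEv_closed CEv0 CEvD CEvZ nA.
  pose T := vec_mx w : 'M[R]_n.
  have hT : forall x, K x -> K (x *m T).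
    move=> x Kx; apply/not_notP => nK; have [y [Ky hy]] := bipolar _ nK.
    have := hw1 _ (CEv_gen _ _ Kx Ky); rewrite -(vec_mxK w) pair_tens -/T.
    lra.
  by have := hA T hT; rewrite /T vec_mxK; lra.
move=> [N [xs [ys [h1 h2 h3]]]]; exists N, xs, ys; split => //.
apply: (can_inj mxvecK); rewrite h3 linear_sum.
by apply: eq_bigr.
Qed.
End Cone.
Lemma linfunP (U W : vectType R) (f : U -> W) (lf : linear f) u : linfun f u = f u.
Proof.
pose fL : {linear U -> W} := HB.pack f (GRing.isLinear.Build _ _ _ _ f lf).
exact: (lfunE fL u).
Qed.

Section Hom.
Variable n : nat.

Definition lin (N : 'M[R]_n) : 'End('rV[R]_n) := linfun (fun x : 'rV[R]_n => x *m N).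
Definition fy (y : 'rV[R]_n) : 'Hom('rV[R]_n, R^o) := linfun (fun x : 'rV[R]_n => (dot x y : R^o)).
Definition phixy (x y : 'rV[R]_n) : 'Hom('End('rV[R]_n), R^o) :=
  linfun (fun M : 'End('rV[R]_n) => (fy y (M x) : R^o)).

Lemma linE N x : lin N x = x *m N.
Proof.
rewrite /lin linfunP // => a u v; by rewrite mulmxDl scalemxAl.
Qed.

Lemma fyE y x : fy y x = dot x y.
Proof.
rewrite /fy linfunP // => a u v /=; by rewrite dotDl dotZl.
Qed.

Lemma phiE x y M : phixy x y M = dot (M x) y.
Proof.
rewrite /phixy linfunP ?fyE // => a u v /=.
by rewrite add_lfunE scale_lfunE linearP.
Qed.

Lemma hom_vec (f : 'Hom('rV[R]_n, R^o)) x : f x = dot x (\row_i f (delta_mx 0 i)).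
Proof.
rewrite {1}(row_sum_delta x) linear_sum /dot; apply: eq_bigr => i _.
by rewrite linearZ /= mxE.
Qed.

Definition matM (M : 'End('rV[R]_n)) : 'M[R]_n := \matrix_(i, j) M (delta_mx 0 i) ord0 j.

Lemma end_mat (M : 'End('rV[R]_n)) : M = lin (matM M).
Proof.
apply/lfunP => x; rewrite linE {1}(row_sum_delta x) linear_sum.
apply/rowP => j; rewrite summxE !mxE; apply: eq_bigr => i _.
by rewrite linearZ /= !mxE.
Qed.

Definition Aphi (phi : 'Hom('End('rV[R]_n), R^o)) : 'M[R]_n :=
  \matrix_(i, j) phi (lin (delta_mx i j)).

Lemma phi_lin (phi : 'Hom('End('rV[R]_n), R^o)) N :
  phi (lin N) = dot (mxvec N) (mxvec (Aphi phi)).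
Proof.
have -> : lin N = \sum_i \sum_j N i j *: lin (delta_mx i j).
  apply/lfunP => x; rewrite linE sum_lfunE {1}(matrix_sum_delta N) mulmx_sumr.
  apply: eq_bigr => i _; rewrite sum_lfunE mulmx_sumr; apply: eq_bigr => j _.
  by rewrite scale_lfunE linE scalemxAr.
rewrite pairE linear_sum; apply: eq_bigr => i _; rewrite linear_sum.
by apply: eq_bigr => j _; rewrite linearZ /= mxE.
Qed.

End Hom.
Arguments lin {n}. Arguments fy {n}. Arguments phixy {n}. Arguments matM {n}. Arguments Aphi {n}.

Lemma final n (K : set 'rV[R]_n) :
  is_cone K -> closed K -> (interior K) !=set0 ->
  dual_cone (pos_ops K) = conv_hull (E_set K).
Proof.
move=> [Kne KD KZ Kpt] Kcl Kint.
have K0 : K 0 by case: Kne => x Kx; rewrite -(scale0r x); apply: KZ.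
apply: funext => phi; apply: propext; split.
- move=> hphi.
  have hA : forall M : 'M[R]_n, (forall x, K x -> K (x *m M)) ->
      0 <= dot (mxvec M) (mxvec (Aphi phi)).
    move=> M hM; rewrite -phi_lin; apply: hphi => x Kx; rewrite linE; exact: hM.
  have [N [xs [ys [hx hy hAe]]]] := @conc_main n K Kne KD KZ Kpt Kcl Kint _ hA.
  have phiM (M : 'End('rV[R]_n)) : phi M = \sum_(k < N) dot (M (xs k)) (ys k).
    rewrite {1}(end_mat _ M) phi_lin hAe linear_sum dot_sumr; apply: eq_bigr => k _.
    change (dot (mxvec (matM M)) (G n (xs k, ys k)) = dot (M (xs k)) (ys k)).
    by rewrite pair_tens -linE -end_mat.
  pose xs' k := if (k < N)%N then N.+1%:R *: xs k else 0.
  exists N.+1, (fun=> N.+1%:R^-1), (fun i => phixy (xs' i) (ys i)); split.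
  + by move=> i; rewrite invr_ge0 ler0n.
  + by rewrite sumr_const card_ord -[_ *+ _]mulr_natl mulfV.
  + move=> i; exists (xs' i), (fy (ys i)); split.
    * rewrite /xs'; case: ifP => _ //; apply: KZ => //; exact: hx.
    * by move=> x Kx; rewrite fyE; apply: hy.
    * by move=> M; rewrite phiE fyE.
  + apply/lfunP => M; rewrite phiM sum_lfunE big_ord_recr /=.
    rewrite scale_lfunE phiE /xs' ltnn linear0 dot0l [X in _ = _ + X]mulr0 addr0.
    apply: eq_bigr => k _; rewrite scale_lfunE phiE ltn_ord linearZ /= dotZl /=.
    have sc : forall a b : R, a *: (b : R^o) = a * b by [].
    by rewrite sc mulrA mulVf ?mul1r // pnatr_eq0.
- move=> [k [c [e [c0 c1 he ->]]]] T hT.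
  rewrite sum_lfunE; apply: sumr_ge0 => i _; rewrite scale_lfunE.
  have [x [x' [Kx hx' ->]]] := he i.
  by apply: mulr_ge0 => //; apply: hx'; apply: hT.
Qed.
End Basics.

Theorem proposition2p3 (R : realType) (n : nat) (K : set 'rV[R]_n) :
  is_cone K -> closed K -> (interior K) !=set0 ->
  dual_cone (pos_ops K) = conv_hull (E_set K).
Proof. exact: final. Qed.
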